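(* Let $g(Z)\in \mathbb{F}_q[Z]$. Let $F\in \mathrm{TA}_n(\mathbb{F}_q[Z,g(Z)^{-1}])\cap \mathrm{GA}_n(\mathbb{F}_q[Z])$ be such that the affine part of $F$ is the identity. Assume that $F_c\in \mathrm{TA}_n(\mathbb{F}_q[c])$ for all $c\in\mathbb{F}_{q^m}$ and all $m$. Then for any $m\in \mathbb{N}^*$ there exist $G,\tilde{G} \in \mathrm{TA}_n(\mathbb{F}_q[Z])$ such that for $c\in \mathbb{F}_{q^m}$: (1) $G_{c}=I_n$ if $g(c)\neq 0$, (2) $G_{c}=F_{c}$ if $g(c)=0$, (3) $\tilde{G}_{c}=F_{c}$ if $g(c)\neq 0$.
   Context: For a ring $R$, $\mathrm{GA}_n(R)$ is the group of polynomial automorphisms of $R^n$ and $\mathrm{TA}_n(R)$ the tame subgroup generated by invertible affine maps and triangular (Jonquières) maps $(a_1X_1+f_1,\dots,a_nX_n+f_n)$, $a_i$ units of $R$, $f_i\in R[X_{i+1},\dots,X_n]$. For $F\in\mathrm{GA}_n(k[Z])$ and $c$ in an extension of $k$, $F_c$ denotes the specialization $Z=c$. $I_n$ is the identity map. *)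

(* Defs.v *)
From HB Require Import structures.
From mathcomp Require Import all_boot all_algebra all_field.
From mathcomp Require Import mpoly.
Set Implicit Arguments. Unset Strict Implicit. Unset Printing Implicit Defensive.
Import GRing.Theory.
Local Open Scope ring_scope.

Definition polymap (K : comNzRingType) (n : nat) := n.-tuple {mpoly K[n]}.

Definition idmap_poly (K : comNzRingType) (n : nat) : polymap K n :=
  [tuple 'X_i | i < n].

Definition pcomp (K : comNzRingType) (n : nat) (F G : polymap K n) : polymap K n :=
  [tuple comp_mpoly G (tnth F i) | i < n].

Definition coeffs_in (K : comNzRingType) (S : K -> Prop) (n : nat) (F : polymap K n) :=
  forall (i : 'I_n) (m : 'X_{1..n}), S ((tnth F i)@_m).

Definition is_GA (K : comNzRingType) (n : nat) (F : polymap K n) :=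
  exists G : polymap K n, pcomp F G = idmap_poly K n /\ pcomp G F = idmap_poly K n.

Definition affine_over (K : comNzRingType) (S : K -> Prop) (n : nat) (F : polymap K n) :=
  exists (A B : 'M[K]_n) (b : 'I_n -> K),
    [/\ (forall i j, S (A i j) /\ S (B i j)), (forall i, S (b i)),
        A *m B = 1%:M, B *m A = 1%:M &
        forall i, tnth F i = \sum_(j < n) (A i j)%:MP * 'X_j + (b i)%:MP].

(* Triangular (Jonquieres) maps over S:
   F_i = a_i X_i + f_i, a_i a unit of S, f_i in S[X_{i+1}, ..., X_n]. *)
Definition triangular_over (K : comNzRingType) (S : K -> Prop) (n : nat) (F : polymap K n) :=
  exists (a a' : 'I_n -> K) (f : 'I_n -> {mpoly K[n]}),
    [/\ (forall i, S (a i) /\ S (a' i) /\ a i * a' i = 1),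
        (forall i (m : 'X_{1..n}), S ((f i)@_m)),
        (forall i (m : 'X_{1..n}), m \in msupp (f i) ->
            forall j : 'I_n, (j <= i)%N -> m j = 0%N) &
        forall i, tnth F i = (a i)%:MP * 'X_i + f i].

Inductive tame_over (K : comNzRingType) (S : K -> Prop) (n : nat) : polymap K n -> Prop :=
| tame_affine F : affine_over S F -> tame_over S F
| tame_triangular F : triangular_over S F -> tame_over S F
| tame_comp F G : tame_over S F -> tame_over S G -> tame_over S (pcomp F G)
| tame_inv F G : tame_over S G -> coeffs_in S F ->
    pcomp F G = idmap_poly K n -> pcomp G F = idmap_poly K n -> tame_over S F.

Definition tame (K : comNzRingType) (n : nat) (F : polymap K n) :=
  tame_over (fun _ : K => True) F.

Definition affine_part_id (K : comNzRingType) (n : nat) (F : polymap K n) :=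
  forall (i : 'I_n) (m : 'X_{1..n}), (mdeg m <= 1)%N ->
    (tnth F i)@_m = ('X_i : {mpoly K[n]})@_m.

(* F_q[Z, g^{-1}] as the subring { p / g^k } of the fraction field F_q(Z). *)
Definition loc_pred (k : fieldType) (g : {poly k}) : {fraction {poly k}} -> Prop :=
  fun x => exists (p : {poly k}) (e : nat), x = tofrac p / (tofrac g) ^+ e.

(* A map over F_q[Z] viewed over F_q(Z) (hence over F_q[Z, g^{-1}]). *)
Definition to_frac_map (k : fieldType) (n : nat) (F : polymap {poly k} n)
  : polymap {fraction {poly k}} n :=
  [tuple map_mpoly (@tofrac _) (tnth F i) | i < n].

Definition evZ (k : fieldType) (L : fieldExtType k) (c : L) (p : {poly k}) : L :=
  (map_poly (in_alg L) p).[c].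

Definition spec (k : fieldType) (L : fieldExtType k) (c : L) (n : nat)
  (F : polymap {poly k} n) : polymap L n :=
  [tuple map_mpoly (evZ c) (tnth F i) | i < n].

Definition adj_pred (k : fieldType) (L : fieldExtType k) (c : L) : L -> Prop :=
  fun x => exists p : {poly k}, x = evZ c p.

(* Main.v *)
Require Import Defs.
From HB Require Import structures.
From mathcomp Require Import all_boot all_algebra all_field.
From mathcomp Require Import mpoly.
From mathcomp Require Import ring.
From mathcomp Require Import fingroup perm.
Set Implicit Arguments. Unset Strict Implicit. Unset Printing Implicit Defensive.
Import GRing.Theory.
Local Open Scope ring_scope.

Notation pc := Defs.pcomp.

Section Gen.
Variables (R : comNzRingType) (n : nat).
Implicit Types (F G H : polymap R n).

Lemma comp_mpolyA (p : {mpoly R[n]}) (lq lr : polymap R n) :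
  (p \mPo lq) \mPo lr = p \mPo [tuple (tnth lq i) \mPo lr | i < n].
Proof.
rewrite (comp_mpolyE p lq) (comp_mpolyE p) raddf_sum /=; apply: eq_bigr => m _.
rewrite comp_mpolyZ rmorph_prod /=; congr (_ *: _).
by apply: eq_bigr => i _; rewrite rmorphXn /= tnth_mktuple.
Qed.

Lemma pcompA F G H : pc (pc F G) H = pc F (pc G H).
Proof.
apply: eq_from_tnth => i; rewrite /Defs.pcomp !tnth_mktuple comp_mpolyA.
by congr comp_mpoly; apply: eq_from_tnth => j; rewrite !tnth_mktuple.
Qed.

Lemma pcomp1F F : pc (idmap_poly R n) F = F.
Proof.
by apply: eq_from_tnth => i; rewrite /Defs.pcomp !tnth_mktuple comp_mpolyXU -tnth_nth.
Qed.

Lemma pcompF1 F : pc F (idmap_poly R n) = F.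
Proof.
by apply: eq_from_tnth => i; rewrite /Defs.pcomp !tnth_mktuple comp_mpoly_id.
Qed.

Lemma tnth_id i : tnth (idmap_poly R n) i = 'X_i.
Proof. by rewrite tnth_mktuple. Qed.

Lemma tnth_pcomp F G i : tnth (pc F G) i = tnth F i \mPo G.
Proof. by rewrite tnth_mktuple. Qed.

Lemma inv_uniq F G G' : pc F G = idmap_poly R n -> pc G' F = idmap_poly R n ->
  G = G'.
Proof.
move=> h1 h2; rewrite -[G]pcomp1F -h2 pcompA h1 pcompF1 //.
Qed.

End Gen.

Definition mapH (R S : comNzRingType) (f : R -> S) n (H : polymap R n) : polymap S n :=
  [tuple map_mpoly f (tnth H i) | i < n].

Lemma tnth_mapH (R S : comNzRingType) (f : R -> S) n (H : polymap R n) i :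
  tnth (mapH f H) i = map_mpoly f (tnth H i).
Proof. by rewrite tnth_mktuple. Qed.

Lemma mcoeff_map_any (R S : comNzRingType) n (f : R -> S) (p : {mpoly R[n]}) m :
  f 0 = 0 -> (map_mpoly f p)@_m = f p@_m.
Proof.
move=> f0; rewrite /map_mpoly /mmap raddf_sum /=.
rewrite (eq_bigr (fun m' => (f p@_m' * (m' == m)%:R))); last first.
  by move=> m' _; rewrite /= mmap1_id mcoeffCM mcoeffX.
case: (boolP (m \in msupp p)) => hm.
  rewrite (bigD1_seq m) ?msupp_uniq //= eqxx mulr1 big1 ?addr0 //.
  by move=> m' /negbTE ->; rewrite mulr0.
rewrite big1_seq; last first.
  by move=> m' /andP[_ hm']; case: eqP hm' hm => [->->|] //; rewrite mulr0.
by move: hm; rewrite mcoeff_msupp negbK => /eqP ->; rewrite f0.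
Qed.

Lemma map_mpoly_any_comp (R S T : comNzRingType) n (f : R -> S) (g : S -> T)
  (p : {mpoly R[n]}) : f 0 = 0 -> g 0 = 0 ->
  map_mpoly g (map_mpoly f p) = map_mpoly (g \o f) p.
Proof.
move=> f0 g0; apply/mpolyP => m.
by rewrite !mcoeff_map_any //= ?f0 ?g0.
Qed.

Lemma map_mpoly_rmorph_comp (R S : comNzRingType) n (f : {rmorphism R -> S})
  (p : {mpoly R[n]}) (lq : polymap R n) :
  map_mpoly f (p \mPo lq) = (map_mpoly f p) \mPo (mapH f lq).
Proof.
elim/mpolyind: p => [|c m p _ _ IH]; first by rewrite !raddf0.
rewrite !raddfD /= IH; congr (_ + _).
rewrite comp_mpolyZ comp_mpolyX map_mpolyZ map_mpolyZ map_mpolyX comp_mpolyZ.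
rewrite comp_mpolyX rmorph_prod; congr (_ *: _); apply: eq_bigr => i _.
by rewrite rmorphXn /= tnth_mapH.
Qed.

Lemma mapH_pcomp (R S : comNzRingType) n (f : {rmorphism R -> S}) (F G : polymap R n) :
  mapH f (pc F G) = pc (mapH f F) (mapH f G).
Proof.
by apply: eq_from_tnth => i; rewrite !(tnth_mapH, tnth_pcomp) map_mpoly_rmorph_comp.
Qed.

Lemma mapH_id (R S : comNzRingType) n (f : {rmorphism R -> S}) :
  mapH f (idmap_poly R n) = idmap_poly S n.
Proof.
by apply: eq_from_tnth => i; rewrite tnth_mapH !tnth_id /= map_mpolyX.
Qed.
Section Elem.
Variables (R : comNzRingType) (n : nat).
Implicit Types (F G H : polymap R n) (f : {mpoly R[n]}).

Definition Emap (i : 'I_n) f : polymap R n :=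
  [tuple (if j == i then 'X_j + f else 'X_j) | j < n].

Lemma tnth_Emap i f j : tnth (Emap i f) j = if j == i then 'X_j + f else 'X_j.
Proof. by rewrite tnth_mktuple. Qed.

Definition Dmap (d : 'I_n -> R) : polymap R n := [tuple d j *: 'X_j | j < n].

Lemma tnth_Dmap d j : tnth (Dmap d) j = d j *: 'X_j.
Proof. by rewrite tnth_mktuple. Qed.

Lemma comp_fix f H :
  (forall m j, f@_m != 0 -> (m j != 0)%N -> tnth H j = 'X_j) -> f \mPo H = f.
Proof.
move=> hf; rewrite comp_mpolyE {3}[f]mpolyE; apply: eq_big_seq => m.
rewrite mcoeff_msupp => nz; congr (_ *: _); rewrite mpolyXE_id.
apply: eq_bigr => j _; case: (eqVneq (m j) 0%N) => [->|/(hf _ _ nz)->].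
  by rewrite !expr0.
by [].
Qed.

Definition avoid (i : 'I_n) f := forall m, f@_m != 0 -> m i = 0%N.

Definition upper (i : 'I_n) f := forall m, f@_m != 0 -> forall j : 'I_n, (j <= i)%N -> m j = 0%N.

Lemma upper_avoid i f : upper i f -> avoid i f.
Proof. by move=> h m /h; apply. Qed.

Definition lform (l : 'I_n -> R) : {mpoly R[n]} := \sum_(j < n) l j *: 'X_j.

Lemma comp_lform l H : lform l \mPo H = \sum_(j < n) l j *: tnth H j.
Proof.
rewrite /lform (big_morph _ (comp_mpolyD H) (comp_mpoly0 H)); apply: eq_bigr => j _.
by rewrite comp_mpolyZ comp_mpolyXU -tnth_nth.
Qed.

Definition fixi (i : 'I_n) f := forall H, (forall j, j != i -> tnth H j = 'X_j) -> f \mPo H = f.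

Lemma avoid_fixi i f : avoid i f -> fixi i f.
Proof.
move=> h H hH; apply: comp_fix => m j nz mj; apply: hH.
by apply/eqP => eji; move: mj; rewrite eji h.
Qed.

Lemma lform_fixi i l : l i = 0 -> fixi i (lform l).
Proof.
move=> li H hH; rewrite comp_lform /lform; apply: eq_bigr => j _.
by case: (eqVneq j i) => [->|/hH->]; rewrite ?li ?scale0r.
Qed.

Lemma Emap_fix_inv i f : fixi i f -> pc (Emap i f) (Emap i (- f)) = idmap_poly R n.
Proof.
move=> hf; apply: eq_from_tnth => j; rewrite tnth_pcomp tnth_Emap tnth_id.
case: (eqVneq j i) => [->|nji].
  rewrite raddfD /= comp_mpolyXU -tnth_nth tnth_Emap eqxx hf; first by rewrite addrNK.
  by move=> l /negbTE hl; rewrite tnth_Emap hl.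
by rewrite comp_mpolyXU -tnth_nth tnth_Emap (negbTE nji).
Qed.

Lemma fixiN i f : fixi i f -> fixi i (- f).
Proof. by move=> h H hH; rewrite raddfN /= h. Qed.

Lemma Emap0 i : Emap i 0 = idmap_poly R n.
Proof. by apply: eq_from_tnth => j; rewrite tnth_Emap tnth_id addr0; case: ifP => // /eqP->. Qed.

Lemma eq_Dmap (a b : 'I_n -> R) : a =1 b -> Dmap a = Dmap b.
Proof. by move=> h; apply: eq_from_tnth => j; rewrite !tnth_Dmap h. Qed.

Lemma Dmap1 : Dmap (fun _ => 1) = idmap_poly R n.
Proof. by apply: eq_from_tnth => j; rewrite tnth_Dmap tnth_id scale1r. Qed.

Lemma DmapM (a b : 'I_n -> R) : pc (Dmap a) (Dmap b) = Dmap (fun j => a j * b j).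
Proof.
apply: eq_from_tnth => j; rewrite tnth_pcomp !tnth_Dmap comp_mpolyZ comp_mpolyXU.
by rewrite -tnth_nth tnth_Dmap scalerA.
Qed.

Definition wDm (b : 'I_n -> R) (m : 'X_{1..n}) := \prod_(j < n) b j ^+ m j.

Lemma mcoeff_compD f b m : (f \mPo Dmap b)@_m = f@_m * wDm b m.
Proof.
elim/mpolyind: f => [|c m0 p _ _ IH]; first by rewrite raddf0 !mcoeff0 mul0r.
rewrite raddfD /= !mcoeffD IH mulrDl; congr (_ + _).
rewrite comp_mpolyZ comp_mpolyX.
rewrite (eq_bigr (fun j => b j ^+ m0 j *: 'X_j ^+ m0 j)); last first.
  by move=> j _; rewrite tnth_Dmap exprZn.
rewrite scaler_prod -mpolyXE_id !mcoeffZ !mcoeffX.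
case: (eqVneq m0 m) => [->|]; last by rewrite !mulr0 mul0r.
by rewrite !mulr1 /wDm.
Qed.

End Elem.
Section WGdef.
Variables (K : fieldType) (n : nat).
Implicit Types (F G H W : polymap K n) (f : {mpoly K[n]}).

Inductive WG : polymap K n -> Prop :=
| WG_id : WG (idmap_poly K n)
| WG_up i f H : upper i f -> WG H -> WG (pc (Emap i f) H)
| WG_lf i l H : l i = 0 -> WG H -> WG (pc (Emap i (lform l)) H).

Lemma WG_comp F G : WG F -> WG G -> WG (pc F G).
Proof.
elim=> [|i f H hf _ IH|i l H hl _ IH] hG; first by rewrite pcomp1F.
  by rewrite pcompA; apply: WG_up => //; apply: IH.
by rewrite pcompA; apply: WG_lf => //; apply: IH.
Qed.

Lemma WG_E_up i f : upper i f -> WG (Emap i f).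
Proof. by move=> h; rewrite -[Emap i f]pcompF1; apply: WG_up => //; apply: WG_id. Qed.

Lemma WG_E_lf i l : l i = 0 -> WG (Emap i (lform l)).
Proof. by move=> h; rewrite -[Emap _ _]pcompF1; apply: WG_lf => //; apply: WG_id. Qed.

Lemma upperN i f : upper i f -> upper i (- f).
Proof. by move=> h m; rewrite mcoeffN oppr_eq0; apply: h. Qed.

Lemma lformN (l : 'I_n -> K) : - lform l = lform (fun j => - l j).
Proof. by rewrite /lform -sumrN; apply: eq_bigr => j _; rewrite scaleNr. Qed.

Lemma WG_inv F : WG F -> exists G, [/\ WG G, pc F G = idmap_poly K n & pc G F = idmap_poly K n].
Proof.
elim=> [|i f H hf _ [G [wG h1 h2]]|i l H hl _ [G [wG h1 h2]]].
- by exists (idmap_poly K n); rewrite pcomp1F; split=> //; apply: WG_id.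
- have fx : fixi i f by apply/avoid_fixi/upper_avoid.
  have e1 : pc (Emap i f) (Emap i (- f)) = idmap_poly K n by apply: Emap_fix_inv.
  have e2 : pc (Emap i (- f)) (Emap i f) = idmap_poly K n.
    by rewrite -{2}[f]opprK; apply: Emap_fix_inv; apply: fixiN.
  exists (pc G (Emap i (- f))); split.
  + by apply: WG_comp => //; apply/WG_E_up/upperN.
  + by rewrite pcompA -(pcompA H) h1 pcomp1F.
  + by rewrite pcompA -(pcompA (Emap i (- f))) e2 pcomp1F.
- have fx : fixi i (lform l) by apply: lform_fixi.
  have e1 : pc (Emap i (lform l)) (Emap i (- lform l)) = idmap_poly K n by apply: Emap_fix_inv.
  have e2 : pc (Emap i (- lform l)) (Emap i (lform l)) = idmap_poly K n.
    by rewrite -{2}[lform l]opprK; apply: Emap_fix_inv; apply: fixiN.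
  exists (pc G (Emap i (- lform l))); split.
  + by apply: WG_comp => //; rewrite lformN; apply: WG_E_lf; rewrite hl oppr0.
  + by rewrite pcompA -(pcompA H) h1 pcomp1F.
  + by rewrite pcompA -(pcompA (Emap i (- _))) e2 pcomp1F.
Qed.

Definition Dinv (a : 'I_n -> K) := fun j => (a j)^-1.

Lemma DmapV a : (forall j, a j != 0) -> pc (Dmap a) (Dmap (Dinv a)) = idmap_poly K n.
Proof.
by move=> nz; rewrite DmapM -Dmap1; apply: eq_Dmap => j; rewrite /Dinv mulfV.
Qed.

Lemma DmapV' a : (forall j, a j != 0) -> pc (Dmap (Dinv a)) (Dmap a) = idmap_poly K n.
Proof.
by move=> nz; rewrite DmapM -Dmap1; apply: eq_Dmap => j; rewrite /Dinv mulVf.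
Qed.

Lemma Dinv_nz a : (forall j, a j != 0) -> forall j, Dinv a j != 0.
Proof. by move=> nz j; rewrite /Dinv invr_eq0. Qed.

Lemma conjE a i f : (forall j, a j != 0) ->
  pc (pc (Dmap a) (Emap i f)) (Dmap (Dinv a)) = Emap i (a i *: (f \mPo Dmap (Dinv a))).
Proof.
move=> nz; apply: eq_from_tnth => j; rewrite !tnth_pcomp tnth_Dmap tnth_Emap.
rewrite comp_mpolyZ comp_mpolyXU -tnth_nth tnth_Emap comp_mpolyZ.
case: (eqVneq j i) => [->|_].
  rewrite comp_mpolyD comp_mpolyXU -tnth_nth tnth_Dmap scalerDr scalerA /Dinv.
  by rewrite mulfV ?scale1r.
by rewrite comp_mpolyXU -tnth_nth tnth_Dmap scalerA /Dinv mulfV ?scale1r.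
Qed.

Lemma upper_conj i f (c : K) (b : 'I_n -> K) : upper i f -> upper i (c *: (f \mPo Dmap b)).
Proof.
move=> h m; rewrite mcoeffZ mcoeff_compD => nz; apply: h.
by move: nz; apply: contra => /eqP ->; rewrite mul0r mulr0.
Qed.

Lemma lform_conj (c : K) (l b : 'I_n -> K) : c *: (lform l \mPo Dmap b) = lform (fun j => c * l j * b j).
Proof.
rewrite comp_lform /lform scaler_sumr; apply: eq_bigr => j _.
by rewrite tnth_Dmap !scalerA mulrA.
Qed.

End WGdef.
Section WGdef2.
Variables (K : fieldType) (n : nat).
Implicit Types (F G H W : polymap K n) (f : {mpoly K[n]}).

Lemma conj_split (A E H B : polymap K n) : pc B A = idmap_poly K n ->
  pc (pc A (pc E H)) B = pc (pc (pc A E) B) (pc (pc A H) B).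
Proof. by move=> h; rewrite !pcompA -(pcompA B A) h pcomp1F. Qed.

Lemma conj_id (A B : polymap K n) : pc A B = idmap_poly K n ->
  pc (pc A (idmap_poly K n)) B = idmap_poly K n.
Proof. by move=> h; rewrite pcompF1. Qed.

Lemma WG_conj a F : (forall j, a j != 0) -> WG F ->
  WG (pc (pc (Dmap a) F) (Dmap (Dinv a))).
Proof.
move=> nz; have hV := DmapV' nz; elim=> [|i f H hf _ IH|i l H hl _ IH].
- by rewrite (conj_id (DmapV nz)); apply: WG_id.
- rewrite (conj_split _ _ hV) (conjE _ _ nz); apply: WG_comp => //.
  by apply/WG_E_up/upper_conj.
- rewrite (conj_split _ _ hV) (conjE _ _ nz) lform_conj; apply: WG_comp => //.
  by apply: WG_E_lf; rewrite hl mulr0 mul0r.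
Qed.

Definition Nice H := exists W d, [/\ WG W, forall j, d j != 0 & H = pc W (Dmap d)].

Lemma Nice_WG W : WG W -> Nice W.
Proof.
move=> h; exists W, (fun _ => 1); split=> //; last by rewrite Dmap1 pcompF1.
by move=> j; apply: oner_neq0.
Qed.

Lemma Nice_D d : (forall j, d j != 0) -> Nice (Dmap d).
Proof. by move=> h; exists (idmap_poly K n), d; split=> //; [apply: WG_id | rewrite pcomp1F]. Qed.

Lemma comp4 (W1 D1 W2 D2 D1' : polymap K n) : pc D1' D1 = idmap_poly K n ->
  pc (pc W1 D1) (pc W2 D2) = pc (pc W1 (pc (pc D1 W2) D1')) (pc D1 D2).
Proof. by move=> h; rewrite !pcompA -(pcompA D1' D1) h pcomp1F. Qed.

Lemma Nice_comp F G : Nice F -> Nice G -> Nice (pc F G).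
Proof.
move=> [W1 [d1 [w1 n1 ->]]] [W2 [d2 [w2 n2 ->]]].
exists (pc W1 (pc (pc (Dmap d1) W2) (Dmap (Dinv d1)))), (fun j => d1 j * d2 j); split.
- by apply: WG_comp => //; apply: WG_conj.
- by move=> j; rewrite mulf_neq0.
- by rewrite -DmapM; apply: comp4; apply: DmapV'.
Qed.

Lemma inv_form (W D W' D' G : polymap K n) :
  pc (pc W D) G = idmap_poly K n -> pc W' W = idmap_poly K n -> pc D' D = idmap_poly K n ->
  G = pc D' W'.
Proof.
move=> h1 h2 h3; apply: (inv_uniq h1).
by rewrite !pcompA -(pcompA W' W) h2 pcomp1F.
Qed.

Lemma Nice_inv F G : Nice F -> pc F G = idmap_poly K n -> pc G F = idmap_poly K n -> Nice G.
Proof.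
move=> [W [d [w nz eF]]] h1 h2.
have [W' [w' e1 e2]] := WG_inv w.
rewrite eF in h1; rewrite (inv_form h1 e2 (DmapV' nz)).
apply: Nice_comp; first by apply/Nice_D/Dinv_nz.
exact: Nice_WG.
Qed.

End WGdef2.
Section Order.
Variables (K : fieldType) (n : nat).

Definition Tmap (f : 'I_n -> {mpoly K[n]}) : polymap K n := [tuple 'X_i + f i | i < n].

Lemma order_WG (r : 'I_n -> nat) (f : 'I_n -> {mpoly K[n]}) :
  injective r ->
  (forall i, WG (Emap i (f i))) ->
  (forall i (H : polymap K n), (forall j, (r i < r j)%N -> tnth H j = 'X_j) -> f i \mPo H = f i) ->
  WG (Tmap f).
Proof.
move=> ri hW hfix.
pose M k := Tmap (fun i => if (r i < k)%N then f i else 0).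
have M0 : M 0%N = idmap_poly K n.
  by apply: eq_from_tnth => i; rewrite !tnth_mktuple addr0.
have MS k : WG (M k) -> WG (M k.+1).
  move=> hk; case: (pickP (fun i => r i == k)) => [i /eqP ri_k | none].
    suff -> : M k.+1 = pc (Emap i (f i)) (M k) by apply: WG_comp.
    apply: eq_from_tnth => j; rewrite /M tnth_pcomp tnth_Emap !tnth_mktuple.
    case: (eqVneq j i) => [->|nji].
      rewrite ri_k ltnSn comp_mpolyD comp_mpolyXU -tnth_nth tnth_mktuple.
      rewrite ri_k ltnn addr0 hfix // => j' hj'.
      by rewrite /M tnth_mktuple -ri_k ltnNge (ltnW hj') addr0.
    rewrite comp_mpolyXU -tnth_nth tnth_mktuple ltnS leq_eqVlt.
    case: (eqVneq (r j) k) => [rjk|//].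
    by move: nji; rewrite -(inj_eq ri) rjk ri_k eqxx.
  suff -> : M k.+1 = M k by [].
  apply: eq_from_tnth => j; rewrite !tnth_mktuple ltnS leq_eqVlt.
  by rewrite none.
have Mall k : WG (M k) by elim: k => [|k IH]; [rewrite M0; apply: WG_id | apply: MS].
set N := (\sum_(i < n) (r i).+1)%N.
suff -> : Tmap f = M N by [].
apply: eq_from_tnth => i; rewrite !tnth_mktuple.
suff -> : (r i < N)%N by [].
by rewrite /N (bigD1 i) //= ltnS leq_addr.
Qed.

Lemma upper_fix (i : 'I_n) (f : {mpoly K[n]}) (H : polymap K n) : upper i f ->
  (forall j : 'I_n, (i < j)%N -> tnth H j = 'X_j) -> f \mPo H = f.
Proof.
move=> hu hH; apply: comp_fix => m j nz mj; apply: hH.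
by rewrite ltnNge; apply: contra mj => le; rewrite (hu _ nz _ le).
Qed.

Lemma WG_upper (f : 'I_n -> {mpoly K[n]}) : (forall i, upper i (f i)) -> WG (Tmap f).
Proof.
move=> hu; apply: (@order_WG (fun i => val i)) => //.
- exact: val_inj.
- by move=> i; apply: WG_E_up.
- by move=> i H hH; apply: upper_fix.
Qed.

End Order.
Section B2sec.
Variables (K : fieldType) (n : nat).
Implicit Types (p q r s t : K).

Definition B2 (i j : 'I_n) p q r s : polymap K n :=
  [tuple (if k == i then p *: 'X_i + q *: 'X_j else
          if k == j then r *: 'X_i + s *: 'X_j else 'X_k) | k < n].

Lemma tnth_B2 i j p q r s k : tnth (B2 i j p q r s) k =
  (if k == i then p *: 'X_i + q *: 'X_j else
          if k == j then r *: 'X_i + s *: 'X_j else 'X_k).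
Proof. by rewrite tnth_mktuple. Qed.

Lemma B2M i j p q r s p' q' r' s' : i != j ->
  pc (B2 i j p q r s) (B2 i j p' q' r' s') =
  B2 i j (p * p' + q * r') (p * q' + q * s') (r * p' + s * r') (r * q' + s * s').
Proof.
move=> nij; apply: eq_from_tnth => k; rewrite tnth_pcomp !tnth_B2.
have ci : 'X_i \mPo B2 i j p' q' r' s' = p' *: 'X_i + q' *: 'X_j.
  by rewrite comp_mpolyXU -tnth_nth tnth_B2 eqxx.
have cj : 'X_j \mPo B2 i j p' q' r' s' = r' *: 'X_i + s' *: 'X_j.
  by rewrite comp_mpolyXU -tnth_nth tnth_B2 eq_sym (negbTE nij) eqxx.
case: (eqVneq k i) => [_|nki].
  rewrite comp_mpolyD !comp_mpolyZ ci cj !scalerDr !scalerA !scalerDl.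
  by rewrite addrACA.
case: (eqVneq k j) => [_|nkj].
  rewrite comp_mpolyD !comp_mpolyZ ci cj !scalerDr !scalerA !scalerDl.
  by rewrite addrACA.
by rewrite comp_mpolyXU -tnth_nth tnth_B2 (negbTE nki) (negbTE nkj).
Qed.

Lemma lform_delta (j : 'I_n) t : lform (fun u => if u == j then t else 0) = t *: 'X_j.
Proof.
rewrite /lform (bigD1 j) //= eqxx big1 ?addr0 // => u /negbTE ->.
by rewrite scale0r.
Qed.

Lemma B2_shear_ij i j t : i != j -> B2 i j 1 t 0 1 = Emap i (lform (fun u => if u == j then t else 0)).
Proof.
move=> nij; apply: eq_from_tnth => k; rewrite tnth_B2 tnth_Emap lform_delta.
case: (eqVneq k i) => [->|nki]; first by rewrite scale1r.
by case: (eqVneq k j) => [->|//]; rewrite scale0r scale1r add0r.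
Qed.

Lemma B2_shear_ji i j t : i != j -> B2 i j 1 0 t 1 = Emap j (lform (fun u => if u == i then t else 0)).
Proof.
move=> nij; apply: eq_from_tnth => k; rewrite tnth_B2 tnth_Emap lform_delta.
case: (eqVneq k i) => [->|nki]; first by rewrite (negbTE nij) scale1r scale0r addr0.
by case: (eqVneq k j) => [->|//]; rewrite scale1r addrC.
Qed.

Lemma WG_shear_ij i j t : i != j -> WG (B2 i j 1 t 0 1).
Proof. by move=> nij; rewrite B2_shear_ij //; apply: WG_E_lf; rewrite (negbTE nij). Qed.

Lemma WG_shear_ji i j t : i != j -> WG (B2 i j 1 0 t 1).
Proof. by move=> nij; rewrite B2_shear_ji //; apply: WG_E_lf; rewrite eq_sym (negbTE nij). Qed.

Lemma WG_w i j t : i != j -> t != 0 -> WG (B2 i j 0 t (- t^-1) 0).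
Proof.
move=> nij nt.
have -> : B2 i j 0 t (- t^-1) 0 =
    pc (pc (B2 i j 1 t 0 1) (B2 i j 1 0 (- t^-1) 1)) (B2 i j 1 t 0 1).
  rewrite !B2M //; congr B2; field; rewrite ?oppr_eq0 ?oner_neq0 ?nt //.
by apply: WG_comp; [apply: WG_comp|]; [apply: WG_shear_ij|apply: WG_shear_ji|apply: WG_shear_ij].
Qed.

Lemma WG_Dij i j t : i != j -> t != 0 -> WG (B2 i j t 0 0 t^-1).
Proof.
move=> nij nt.
have -> : B2 i j t 0 0 t^-1 = pc (B2 i j 0 t (- t^-1) 0) (B2 i j 0 (-1) (- (-1)^-1) 0).
  rewrite !B2M //; congr B2; field; rewrite ?oppr_eq0 ?oner_neq0 ?nt //.
apply: WG_comp; apply: WG_w => //; rewrite oppr_eq0; exact: oner_neq0.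
Qed.

Lemma B2_D i j t s : i != j ->
  B2 i j t 0 0 s = Dmap (fun k => if k == i then t else if k == j then s else 1).
Proof.
move=> nij; apply: eq_from_tnth => k; rewrite tnth_B2 tnth_Dmap.
case: (eqVneq k i) => [->|nki]; first by rewrite scale0r addr0.
by case: (eqVneq k j) => [->|_]; rewrite ?scale0r ?add0r ?scale1r.
Qed.

Lemma Nice_swap i j : i != j -> Nice (B2 i j 0 1 1 0).
Proof.
move=> nij.
have -> : B2 i j 0 1 1 0 = pc (B2 i j 0 (-1) (- (-1)^-1) 0) (B2 i j 1 0 0 (-1)).
  rewrite !B2M //; congr B2; field; rewrite ?oppr_eq0 ?oner_neq0 //.
apply: Nice_comp.
  by apply/Nice_WG/WG_w => //; rewrite oppr_eq0 oner_neq0.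
rewrite B2_D //; apply: Nice_D => k.
by case: ifP => _; [|case: ifP => _]; rewrite ?oppr_eq0 oner_neq0.
Qed.

End B2sec.
Section LinSec.
Variables (K : fieldType).

Definition Lin n (A : 'M[K]_n) : polymap K n := [tuple \sum_(j < n) A i j *: 'X_j | i < n].

Lemma tnth_Lin n (A : 'M[K]_n) i : tnth (Lin A) i = \sum_(j < n) A i j *: 'X_j.
Proof. by rewrite tnth_mktuple. Qed.

Lemma LinM n (A B : 'M[K]_n) : pc (Lin A) (Lin B) = Lin (A *m B).
Proof.
apply: eq_from_tnth => i; rewrite tnth_pcomp !tnth_Lin.
rewrite (big_morph _ (comp_mpolyD (Lin B)) (comp_mpoly0 (Lin B))).
rewrite (eq_bigr (fun j => \sum_(k < n) (A i j * B j k) *: 'X_k)); last first.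
  move=> j _; rewrite comp_mpolyZ comp_mpolyXU -tnth_nth tnth_Lin scaler_sumr.
  by apply: eq_bigr => k _; rewrite scalerA.
rewrite exchange_big /=; apply: eq_bigr => k _; rewrite mxE scaler_suml //.
Qed.

Lemma sum_delta n (i : 'I_n) (c : 'I_n -> K) :
  \sum_(j < n) ((i == j)%:R * c j) *: ('X_j : {mpoly K[n]}) = c i *: 'X_i.
Proof.
rewrite (bigD1 i) //= eqxx mul1r big1 ?addr0 // => j /negbTE nj.
by rewrite eq_sym nj mul0r scale0r.
Qed.

Lemma Lin1 n : Lin (1%:M : 'M[K]_n) = idmap_poly K n.
Proof.
apply: eq_from_tnth => i; rewrite tnth_Lin tnth_id.
rewrite (eq_bigr (fun j => ((i == j)%:R * 1) *: 'X_j)); first by rewrite sum_delta scale1r.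
by move=> j _; rewrite mxE mulr1.
Qed.

Lemma Lin_perm n (s : 'S_n) : Lin (perm_mx s : 'M[K]_n) = [tuple 'X_(s i) | i < n].
Proof.
apply: eq_from_tnth => i; rewrite tnth_Lin tnth_mktuple.
rewrite (eq_bigr (fun j => ((s i == j)%:R * 1) *: 'X_j)); first by rewrite sum_delta scale1r.
by move=> j _; rewrite /perm_mx !mxE mulr1.
Qed.

Lemma Lin_tperm n (i j : 'I_n) : i != j -> Lin (perm_mx (tperm i j) : 'M[K]_n) = B2 i j 0 1 1 0.
Proof.
move=> nij; rewrite Lin_perm; apply: eq_from_tnth => k; rewrite tnth_mktuple tnth_B2.
case: (eqVneq k i) => [->|nki]; first by rewrite tpermL scale0r scale1r add0r.
case: (eqVneq k j) => [->|nkj]; first by rewrite tpermR scale0r scale1r addr0.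
by rewrite tpermD // eq_sym.
Qed.

Lemma Nice_perm n (s : 'S_n) : Nice (Lin (perm_mx s : 'M[K]_n)).
Proof.
have [ts -> hts] := prod_tpermP s; elim: ts hts => [|t ts IH] /=.
  by move=> _; rewrite big_nil perm_mx1 Lin1; apply: Nice_WG; apply: WG_id.
move=> /andP[ht hts]; rewrite big_cons perm_mxM -LinM.
apply: Nice_comp; last exact: IH.
by rewrite Lin_tperm //; apply: Nice_swap.
Qed.

Lemma Lin_unit n (A : 'M[K]_n) : (forall i, A i i = 1) ->
  Lin A = Tmap (fun i => lform (fun j => if j == i then 0 else A i j)).
Proof.
move=> h1; apply: eq_from_tnth => i; rewrite tnth_Lin tnth_mktuple /lform.
rewrite (bigD1 i) //= (bigD1 i (P := predT)) //= eqxx h1 scale1r scale0r add0r.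
congr (_ + _); apply: eq_bigr => j /negbTE ->; by [].
Qed.

Lemma lform_fix n (l : 'I_n -> K) (H : polymap K n) :
  (forall j, l j != 0 -> tnth H j = 'X_j) -> lform l \mPo H = lform l.
Proof.
move=> h; rewrite comp_lform /lform; apply: eq_bigr => j _.
by case: (eqVneq (l j) 0) => [->|/h->]; rewrite ?scale0r.
Qed.

Lemma WG_Lin_up n (A : 'M[K]_n) : (forall i, A i i = 1) ->
  (forall i j : 'I_n, (j < i)%N -> A i j = 0) -> WG (Lin A).
Proof.
move=> h1 h0; rewrite Lin_unit //; apply: (@order_WG _ _ (fun i => val i)).
- exact: val_inj.
- by move=> i; apply: WG_E_lf; rewrite eqxx.
- move=> i H hH; apply: lform_fix => j; case: (eqVneq j i) => [_|nji]; first by rewrite eqxx.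
  move=> nz; apply: hH; rewrite ltn_neqAle eq_sym; apply/andP; split.
    exact: nji.
  by rewrite leqNgt; apply: contra nz => /h0->.
Qed.

Lemma WG_Lin_low n (A : 'M[K]_n) : (forall i, A i i = 1) ->
  (forall i j : 'I_n, (i < j)%N -> A i j = 0) -> WG (Lin A).
Proof.
move=> h1 h0; rewrite Lin_unit //; apply: (@order_WG _ _ (fun i => val (rev_ord i))).
- by move=> i j /val_inj /rev_ord_inj.
- by move=> i; apply: WG_E_lf; rewrite eqxx.
- move=> i H hH; apply: lform_fix => j; case: (eqVneq j i) => [_|nji]; first by rewrite eqxx.
  move=> nz; apply: hH; rewrite /= ltn_sub2lE //.
  rewrite ltn_neqAle; apply/andP; split.
    exact: nji.
  by rewrite leqNgt; apply: contra nz => /h0->.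
Qed.

Lemma Lin_diag_split n (U : 'M[K]_n) : (forall j, U j j != 0) ->
  Lin U = pc (Lin (\matrix_(i, j) (U i j / U j j))) (Dmap (fun j => U j j)).
Proof.
move=> nz; apply: eq_from_tnth => i; rewrite tnth_pcomp !tnth_Lin.
rewrite (big_morph _ (comp_mpolyD _) (comp_mpoly0 _)); apply: eq_bigr => j _.
rewrite comp_mpolyZ comp_mpolyXU -tnth_nth tnth_Dmap scalerA mxE divfK //.
Qed.

Lemma Nice_Lin_up n (U : 'M[K]_n) : (forall j, U j j != 0) ->
  (forall i j : 'I_n, (j < i)%N -> U i j = 0) -> Nice (Lin U).
Proof.
move=> nz h0; rewrite Lin_diag_split //; apply: Nice_comp; last exact: Nice_D.
apply: Nice_WG; apply: WG_Lin_up => [i|i j ji]; rewrite mxE ?divff //.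
by rewrite h0 // mul0r.
Qed.

End LinSec.
Section TameNice.
Variables (K : fieldType).

Lemma Nice_Lin_S m (A B : 'M[K]_m.+1) : A *m B = 1%:M -> Nice (Lin A).
Proof.
move=> hAB.
have hc := cormen_lup_correct A; have hP := cormen_lup_perm A.
have hL1 := @cormen_lup_lower _ _ A; have hU0 := @cormen_lup_upper _ _ A.
have hdL := cormen_lup_detL A.
case E: (cormen_lup A) hc hP hL1 hU0 hdL => [[P L] U] /= hc hP hL1 hU0 hdL.
case/is_perm_mxP: hP => s hs; subst P.
have hc' : perm_mx s *m A = L *m U by rewrite !mulmxE.
have eA : A = perm_mx s^-1 *m (L *m U).
  by rewrite -hc' mulmxA -perm_mxM mulVg perm_mx1 mul1mx.
have dA : \det A != 0.
  apply/eqP => d0; move: (congr1 determinant hAB).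
  by rewrite det_mulmx d0 mul0r det1 => /eqP; rewrite eq_sym oner_eq0.
have dU : \det U = \prod_(i < m.+1) U i i.
  rewrite -det_tr det_trig; first by apply: eq_bigr => i _; rewrite mxE.
  by apply/is_trig_mxP => i j ij; rewrite mxE hU0.
have nzU : forall j, U j j != 0.
  move=> j; apply: contra dA => /eqP Uj.
  have : \det (perm_mx s *m A) = 0.
    rewrite hc' det_mulmx hdL mul1r dU.
    by rewrite (bigD1 j) //= Uj mul0r.
  by rewrite det_mulmx det_perm => /eqP; rewrite mulf_eq0 signr_eq0.
rewrite eA -!LinM; apply: Nice_comp; first exact: Nice_perm.
apply: Nice_comp; last exact: Nice_Lin_up.
apply: Nice_WG; apply: WG_Lin_low => [i|i j ij]; first by rewrite hL1 ?eqxx.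
by rewrite hL1 ?(ltnW ij) // eqE /= ltn_eqF.
Qed.

Lemma Nice_Lin n (A B : 'M[K]_n) : A *m B = 1%:M -> Nice (Lin A).
Proof.
case: n A B => [|m] A B; last exact: Nice_Lin_S.
move=> _; have -> : Lin A = idmap_poly K 0 by apply: eq_from_tnth => -[].
by apply: Nice_WG; apply: WG_id.
Qed.

Lemma upper_const n (i : 'I_n) (c : K) : upper i c%:MP.
Proof.
move=> m; rewrite mcoeffC; case: (eqVneq m 0%MM) => [-> _ j _|]; last by rewrite mulr0 eqxx.
by rewrite mnm0E.
Qed.

Lemma Nice_affine n (F : polymap K n) : affine_over (fun _ => True) F -> Nice F.
Proof.
move=> [A [B [b [_ _ hAB _ hF]]]].
have -> : F = pc (Tmap (fun i => (b i)%:MP)) (Lin A).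
  apply: eq_from_tnth => i; rewrite tnth_pcomp tnth_mktuple hF comp_mpolyD comp_mpolyC.
  rewrite comp_mpolyXU -tnth_nth tnth_Lin; congr (_ + _).
  by apply: eq_bigr => j _; rewrite mul_mpolyC.
apply: Nice_comp; last exact: Nice_Lin hAB.
by apply: Nice_WG; apply: WG_upper => i; apply: upper_const.
Qed.

Lemma Nice_triangular n (F : polymap K n) : triangular_over (fun _ => True) F -> Nice F.
Proof.
move=> [a [a' [f [ha _ hs hF]]]].
have nza : forall i, a i != 0.
  by move=> i; have [_ [_ e]] := ha i; apply/eqP => a0; move: e; rewrite a0 mul0r => /eqP; rewrite eq_sym oner_eq0.
have -> : F = pc (Dmap a) (Tmap (fun i => a' i *: f i)).
  apply: eq_from_tnth => i; rewrite tnth_pcomp tnth_Dmap hF comp_mpolyZ comp_mpolyXU -tnth_nth.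
  rewrite tnth_mktuple scalerDr scalerA; have [_ [_ ->]] := ha i.
  by rewrite scale1r mul_mpolyC.
apply: Nice_comp; first exact: Nice_D.
apply: Nice_WG; apply: WG_upper => i m; rewrite mcoeffZ => nz j ji.
apply: (hs i); last exact: ji.
by rewrite mcoeff_msupp; apply: contra nz => /eqP->; rewrite mulr0.
Qed.

Lemma tame_Nice n (F : polymap K n) : tame_over (fun _ => True) F -> Nice F.
Proof.
elim=> {F} [F h|F h|F G _ hF _ hG|F G _ hG _ h1 h2].
- exact: Nice_affine.
- exact: Nice_triangular.
- exact: Nice_comp.
- exact: (Nice_inv hG h2 h1).
Qed.

End TameNice.
Section Jac.
Variables (R : comNzRingType) (n : nat).
Implicit Types (p q : {mpoly R[n]}) (F G : polymap R n).

Definition chainP G p := forall j : 'I_n,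
  (p \mPo G)^`M(j) = \sum_(k < n) ((p^`M(k)) \mPo G) * (tnth G k)^`M(j).

Lemma mderivXU (i k : 'I_n) : ('X_i : {mpoly R[n]})^`M(k) = ((i == k)%:R)%:MP.
Proof.
rewrite mderivX mnm1E; case: (eqVneq i k) => [->|_]; last by rewrite scale0r.
have -> : (U_(k) - U_(k))%MM = 0%MM by apply/mnmP => l; rewrite mnmBE subnn mnm0E.
by rewrite mpolyX0 scale1r.
Qed.

Lemma chainD G p q : chainP G p -> chainP G q -> chainP G (p + q).
Proof.
move=> hp hq j; rewrite comp_mpolyD mderivD hp hq -big_split /=.
by apply: eq_bigr => k _; rewrite mderivD comp_mpolyD mulrDl.
Qed.

Lemma chainM G p q : chainP G p -> chainP G q -> chainP G (p * q).
Proof.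
move=> hp hq j; rewrite rmorphM /= mderivM hp hq mulr_suml mulr_sumr -big_split /=.
apply: eq_bigr => k _; rewrite mderivM comp_mpolyD !rmorphM /=; ring.
Qed.

Lemma chainZ G c p : chainP G p -> chainP G (c *: p).
Proof.
move=> hp j; rewrite comp_mpolyZ mderivZ hp scaler_sumr; apply: eq_bigr => k _.
by rewrite mderivZ comp_mpolyZ scalerAl.
Qed.

Lemma chain1 G : chainP G 1.
Proof.
move=> j; rewrite comp_mpoly1 -mpolyC1 mderivC big1 // => k _.
by rewrite mderivC comp_mpolyC mul0r.
Qed.

Lemma chainX G i : chainP G 'X_i.
Proof.
move=> j; rewrite comp_mpolyXU -tnth_nth (bigD1 i) //= mderivXU eqxx comp_mpolyC mul1r.
rewrite big1 ?addr0 // => k /negbTE nk.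
by rewrite mderivXU eq_sym nk comp_mpolyC mul0r.
Qed.

Lemma chain_all G p : chainP G p.
Proof.
elim/mpolyind: p => [|c m p _ _ IH].
  by move=> j; rewrite comp_mpoly0 (@mderiv0 _ _ j) big1 // => k _; rewrite (@mderiv0 _ _ k) comp_mpoly0 mul0r.
apply: (chainD _ IH); apply: chainZ; rewrite mpolyXE_id.
apply: (big_ind (chainP G)); [exact: chain1 | exact: chainM |] => i _.
elim: (m i) => [|e IHe]; first by rewrite expr0; apply: chain1.
by rewrite exprS; apply: chainM => //; apply: chainX.
Qed.

Definition Jac F : 'M[{mpoly R[n]}]_n := \matrix_(i, j) (tnth F i)^`M(j).

Lemma JacM F G : Jac (pc F G) = map_mx (comp_mpoly G) (Jac F) *m Jac G.
Proof.
apply/matrixP => i j; rewrite !mxE tnth_pcomp chain_all; apply: eq_bigr => k _.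
by rewrite !mxE.
Qed.

Lemma detJacM F G : \det (Jac (pc F G)) = (\det (Jac F) \mPo G) * \det (Jac G).
Proof. by rewrite JacM det_mulmx det_map_mx. Qed.

Lemma Jac_id : Jac (idmap_poly R n) = 1%:M.
Proof. by apply/matrixP => i j; rewrite !mxE tnth_id mderivXU rmorph_nat. Qed.

Lemma avoid_deriv0 i p : avoid i p -> p^`M(i) = 0.
Proof.
move=> h; apply/mpolyP => m; rewrite mcoeff_mderiv mcoeff0.
case: (eqVneq p@_(m + U_(i)) 0) => [->|/h]; first by rewrite mul0rn.
by rewrite mnmDE mnm1E eqxx addn1.
Qed.

Lemma detJac_E i f : avoid i f -> \det (Jac (Emap i f)) = 1.
Proof.
move=> h; rewrite (expand_det_col _ i) (bigD1 i) //= big1 ?addr0; last first.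
  move=> k nk; rewrite !mxE tnth_Emap; case: ifP => [/eqP eki|_].
    by move: nk; rewrite eki eqxx.
  rewrite mderivXU; case: eqP => [eki|_]; first by move: nk; rewrite eki eqxx.
  by rewrite mul0r.
rewrite !mxE tnth_Emap eqxx mderivD (avoid_deriv0 h) addr0 mderivXU eqxx mul1r.
rewrite /cofactor addnn -mul2n exprM sqrrN !expr1n mul1r.
have -> : row' i (col' i (Jac (Emap i f))) = 1%:M.
  apply/matrixP => a b; rewrite !mxE tnth_Emap; case: ifP => [/eqP e|_].
    by move: (neq_lift i a); rewrite e eqxx.
  by rewrite mderivXU (inj_eq (@lift_inj _ i)) rmorph_nat.
by rewrite det1.
Qed.

Lemma detJac_D (d : 'I_n -> R) : \det (Jac (Dmap d)) = (\prod_j d j)%:MP.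
Proof.
have -> : Jac (Dmap d) = diag_mx (\row_j (d j)%:MP).
  apply/matrixP => i j; rewrite !mxE tnth_Dmap mderivZ mderivXU.
  by case: (eqVneq i j) => [->|_]; rewrite ?mulr1n ?mulr0n ?scaler0 // -mul_mpolyC mulr1.
by rewrite det_diag rmorph_prod; apply: eq_bigr => j _; rewrite mxE.
Qed.

Lemma coef0_detJac F : (\det (Jac F))@_0 = \det (\matrix_(i, j) (tnth F i)@_U_(j)).
Proof.
transitivity (\det (map_mx (mcoeff 0%MM) (Jac F))); first by rewrite det_map_mx.
congr determinant; apply/matrixP => i j.
by rewrite !mxE mcoeff_mderiv add0m mnm0E.
Qed.

End Jac.
Section NiceWG.
Variables (K : fieldType) (n : nat).

Lemma avoid_lform (l : 'I_n -> K) i : l i = 0 -> avoid i (lform l).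
Proof.
move=> li m; rewrite /lform (big_morph _ (mcoeffD m) (mcoeff0 _ m)).
apply: contraNeq => mi; rewrite big1 // => j _.
rewrite mcoeffZ mcoeffX; case: (eqVneq U_(j)%MM m) => [e|]; last by rewrite mulr0.
case: (eqVneq j i) => [->|nji]; first by rewrite li mul0r.
by move: mi; rewrite -e mnm1E (negbTE nji).
Qed.

Lemma detJac_WG (W : polymap K n) : WG W -> \det (Jac W) = 1.
Proof.
elim=> [|i f H hf _ IH|i l H hl _ IH].
- by rewrite Jac_id det1.
- by rewrite detJacM detJac_E ?IH ?comp_mpoly1 ?mulr1 //; apply: upper_avoid.
- by rewrite detJacM detJac_E ?IH ?comp_mpoly1 ?mulr1 //; apply: avoid_lform.
Qed.

Lemma WG_D1 (d : 'I_n -> K) : (forall j, d j != 0) -> \prod_j d j = 1 -> WG (Dmap d).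
Proof.
case: n d => [|m] d nz p1.
  have -> : Dmap d = idmap_poly K 0 by apply: eq_from_tnth => -[].
  exact: WG_id.
set i0 : 'I_m.+1 := ord0.
pose e (s : seq 'I_m.+1) := fun k => if k == i0 then \prod_(j <- s) (d j)^-1
  else if k \in s then d k else 1.
have He : forall s, uniq s -> i0 \notin s -> WG (Dmap (e s)).
  elim=> [|j s IH] /=.
    move=> _ _; rewrite (@eq_Dmap _ _ _ (fun _ => 1)); first by rewrite Dmap1; apply: WG_id.
    by move=> k; rewrite /e big_nil in_nil; case: ifP.
  move=> /andP[js us]; rewrite in_cons negb_or => /andP[ij0 i0s].
  have nj : i0 != j by [].
  have -> : Dmap (e (j :: s)) = pc (Dmap (e s)) (B2 i0 j (d j)^-1 0 0 (d j)^-1^-1).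
    rewrite B2_D // DmapM; apply: eq_Dmap => k; rewrite /e big_cons in_cons.
    case: (eqVneq k i0) => [_|nki0]; first by rewrite mulrC.
    case: (eqVneq k j) => [ekj|nkj] /=; first by rewrite ekj (negbTE js) mul1r invrK.
    by rewrite mulr1.
  by apply: WG_comp; [apply: IH | apply: WG_Dij; rewrite // invr_eq0].
set s := [seq j <- enum 'I_m.+1 | j != i0].
have -> : Dmap d = Dmap (e s).
  apply: eq_Dmap => k; rewrite /e.
  case: (eqVneq k i0) => [->|nk]; last by rewrite mem_filter nk mem_enum.
  have hp : d i0 * \prod_(j | j != i0) d j = 1 by move: p1; rewrite (bigD1 i0).
  have nzp : \prod_(j | j != i0) d j != 0.
    by apply/eqP => h0; move: hp; rewrite h0 mulr0 => /eqP; rewrite eq_sym oner_eq0.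
  rewrite prodfV big_filter big_enum_cond /=.
  apply: (mulIf nzp); rewrite hp mulVf //.
apply: He; first by rewrite filter_uniq // enum_uniq.
by rewrite mem_filter eqxx.
Qed.

Lemma WG_of_Nice (F : polymap K n) : Nice F ->
  (forall i j : 'I_n, (tnth F i)@_U_(j) = (i == j)%:R) -> WG F.
Proof.
move=> [W [d [w nz eF]]] hl.
have h1 : \det (Jac F) = (\prod_j d j)%:MP.
  by rewrite eF detJacM detJac_WG // comp_mpoly1 mul1r detJac_D.
have h2 : (\det (Jac F))@_0 = 1.
  rewrite coef0_detJac -[RHS](det1 _ n); congr determinant.
  by apply/matrixP => i j; rewrite !mxE hl.
have p1 : \prod_j d j = 1 by move: h2; rewrite h1 mcoeffC eqxx mulr1.
by rewrite eF; apply: WG_comp => //; apply: WG_D1.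
Qed.

End NiceWG.
Lemma evZ_zmod (k : fieldType) (L : fieldExtType k) (c : L) : zmod_morphism (@evZ k L c).
Proof. by move=> p q; rewrite /evZ rmorphB hornerD hornerN. Qed.

HB.instance Definition _ (k : fieldType) (L : fieldExtType k) (c : L) :=
  GRing.isZmodMorphism.Build {poly k} L (@evZ k L c) (evZ_zmod c).

Lemma evZ_monoid (k : fieldType) (L : fieldExtType k) (c : L) : monoid_morphism (@evZ k L c).
Proof.
by split=> [|p q]; rewrite /evZ ?rmorph1 ?hornerC // rmorphM hornerM.
Qed.

HB.instance Definition _ (k : fieldType) (L : fieldExtType k) (c : L) :=
  GRing.isMonoidMorphism.Build {poly k} L (@evZ k L c) (evZ_monoid c).

Check (fun (k : fieldType) (L : fieldExtType k) (c : L) => (@evZ k L c : {rmorphism {poly k} -> L})).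

Lemma spec_mapH (k : fieldType) (L : fieldExtType k) (c : L) n (G : polymap {poly k} n) :
  spec c G = mapH (@evZ k L c) G.
Proof. by []. Qed.

Lemma spec_pcomp (k : fieldType) (L : fieldExtType k) (c : L) n (F G : polymap {poly k} n) :
  spec c (pc F G) = pc (spec c F) (spec c G).
Proof. by rewrite !spec_mapH mapH_pcomp. Qed.

Lemma spec_id (k : fieldType) (L : fieldExtType k) (c : L) n :
  spec c (idmap_poly {poly k} n) = idmap_poly L n.
Proof. by rewrite spec_mapH mapH_id. Qed.

Lemma evZC (k : fieldType) (L : fieldExtType k) (c : L) (a : k) : evZ c a%:P = a%:A.
Proof. by rewrite /evZ map_polyC hornerC. Qed.
Section TameGen.
Variables (R : comNzRingType) (n : nat).

Lemma sum_deltaR (i : 'I_n) (c : 'I_n -> R) :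
  \sum_(j < n) ((i == j)%:R * c j) *: ('X_j : {mpoly R[n]}) = c i *: 'X_i.
Proof.
rewrite (bigD1 i) //= eqxx mul1r big1 ?addr0 // => j /negbTE nj.
by rewrite eq_sym nj mul0r scale0r.
Qed.

Lemma tame_id : tame (idmap_poly R n).
Proof.
apply: tame_affine; exists 1%:M, 1%:M, (fun _ => 0); split => //; rewrite ?mulmx1 //.
move=> i; rewrite tnth_id mpolyC0 addr0.
rewrite (eq_bigr (fun j => ((i == j)%:R * 1) *: 'X_j)); first by rewrite sum_deltaR scale1r.
by move=> j _; rewrite mxE mulr1 mul_mpolyC.
Qed.

Lemma upperNR i (f : {mpoly R[n]}) : upper i f -> upper i (- f).
Proof. by move=> h m; rewrite mcoeffN oppr_eq0; apply: h. Qed.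

Lemma tame_Emap_up i (f : {mpoly R[n]}) : upper i f -> tame (Emap i f).
Proof.
move=> hu; apply: tame_triangular.
exists (fun _ => 1), (fun _ => 1), (fun j => if j == i then f else 0); split => //.
- by move=> j; rewrite mulr1.
- move=> j m; case: (eqVneq j i) => [->|_]; last by rewrite msupp0.
  by rewrite mcoeff_msupp => nz j0 le; apply: hu.
- move=> j; rewrite tnth_Emap mul1r.
  by case: (eqVneq j i) => [->|_]; rewrite ?addr0.
Qed.

Lemma tame_Emap_lf i (l : 'I_n -> R) : l i = 0 -> tame (Emap i (lform l)).
Proof.
move=> li; pose M : 'M[R]_n := \matrix_(a, b) ((a == i)%:R * l b).
have MM : M *m M = 0.
  apply/matrixP => a b; rewrite !mxE (bigD1 i) //= !mxE eqxx li mul1r mulr0 mul0r add0r.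
  by rewrite big1 // => t /negbTE nt; rewrite !mxE nt !mul0r mulr0.
apply: tame_affine; exists (1%:M + M), (1%:M - M), (fun _ => 0); split => //.
- by rewrite mulmxDl !mulmxBr !mul1mx mulmx1 MM subr0 subrK.
- by rewrite mulmxDr mulmx1 mulmxDl mulNmx mul1mx MM oppr0 addr0 subrK.
- move=> k; rewrite mpolyC0 addr0 tnth_Emap.
  rewrite (eq_bigr (fun j => ((k == j)%:R * 1) *: 'X_j + ((k == i)%:R * l j) *: 'X_j)); last first.
    by move=> j _; rewrite !mxE mulr1 mul_mpolyC scalerDl.
  rewrite big_split /= sum_deltaR scale1r /lform.
  case: (eqVneq k i) => [->|_].
    by congr (_ + _); apply: eq_bigr => j _; rewrite mul1r.
  by rewrite big1 ?addr0 // => j _; rewrite mul0r scale0r.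
Qed.

Lemma map_lform (S : comNzRingType) (f : {rmorphism R -> S}) (l : 'I_n -> R) :
  map_mpoly f (lform l) = lform (fun j => f (l j)).
Proof.
rewrite /lform (raddf_sum (map_mpoly f)); apply: eq_bigr => j _ /=.
by rewrite map_mpolyZ map_mpolyX.
Qed.

Lemma map_Emap (S : comNzRingType) (f : {rmorphism R -> S}) i (p : {mpoly R[n]}) :
  mapH f (Emap i p) = Emap i (map_mpoly f p).
Proof.
apply: eq_from_tnth => j; rewrite tnth_mapH !tnth_Emap.
by case: ifP => _; rewrite ?rmorphD /= map_mpolyX.
Qed.

Lemma lformNR (l : 'I_n -> R) : - lform l = lform (fun j => - l j).
Proof. by rewrite /lform -sumrN; apply: eq_bigr => j _; rewrite scaleNr. Qed.

Lemma eq_lform (l1 l2 : 'I_n -> R) : l1 =1 l2 -> lform l1 = lform l2.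
Proof. by move=> h; rewrite /lform; apply: eq_bigr => j _; rewrite h. Qed.

Lemma lform0 : lform (fun _ : 'I_n => (0 : R)) = 0.
Proof. by rewrite /lform big1 // => j _; rewrite scale0r. Qed.

End TameGen.
Section Lift.
Variables (k : fieldType) (L : fieldExtType k) (c : L) (n : nat) (e : {poly k}).
Hypothesis ec : evZ c e = 1.
Let E := <<1; c>>%AS.
Local Notation KK := (subvs_of E).

Lemma adj_of (y : KK) : exists p : {poly k}, evZ c p == vsval y.
Proof.
have /Fadjoin_polyP [q /polyOver1P [p ->] hq] := subvsP y.
by exists p; rewrite hq.
Qed.

Definition liftc (y : KK) : {poly k} := if y == 0 then 0 else xchoose (adj_of y) * e.

Lemma liftc0 : liftc 0 = 0.
Proof. by rewrite /liftc eqxx. Qed.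

Lemma ev_liftc y : evZ c (liftc y) = vsval y.
Proof.
rewrite /liftc; case: eqP => [->|_]; first by rewrite !rmorph0.
by rewrite rmorphM /= ec mulr1; apply/eqP; apply: (xchooseP (adj_of y)).
Qed.

Lemma ev_liftc0 (c' : L) y : evZ c' e = 0 -> evZ c' (liftc y) = 0.
Proof.
move=> h; rewrite /liftc; case: eqP => _; first by rewrite rmorph0.
by rewrite rmorphM /= h mulr0.
Qed.

Lemma map_liftc (p : {mpoly KK[n]}) :
  map_mpoly (evZ c) (map_mpoly liftc p) = map_mpoly vsval p.
Proof.
apply/mpolyP => m; rewrite mcoeff_map_mpoly /= mcoeff_map_any ?liftc0 //.
by rewrite ev_liftc mcoeff_map_mpoly.
Qed.

Lemma map_liftc0 (c' : L) (p : {mpoly KK[n]}) : evZ c' e = 0 ->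
  map_mpoly (evZ c') (map_mpoly liftc p) = 0.
Proof.
move=> h; apply/mpolyP => m; rewrite mcoeff_map_mpoly /= mcoeff_map_any ?liftc0 //.
by rewrite ev_liftc0 // mcoeff0.
Qed.

Definition Lft (W : polymap KK n) := exists G G' : polymap {poly k} n,
  [/\ tame G, tame G', pc G G' = idmap_poly {poly k} n /\ pc G' G = idmap_poly {poly k} n,
      spec c G = mapH vsval W &
      forall c' : L, evZ c' e = 0 -> spec c' G = idmap_poly L n].

Lemma Lft_id : Lft (idmap_poly KK n).
Proof.
exists (idmap_poly _ n), (idmap_poly _ n); split.
- exact: tame_id.
- exact: tame_id.
- by rewrite pcompF1.
- by rewrite spec_id mapH_id.
- by move=> c' _; rewrite spec_id.
Qed.

Lemma Lft_comp A B : Lft A -> Lft B -> Lft (pc A B).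
Proof.
move=> [G [G' [t t' [h1 h2] hs hc]]] [H [H' [u u' [k1 k2] ks kc]]].
exists (pc G H), (pc H' G'); split.
- exact: tame_comp.
- exact: tame_comp.
- by split; [rewrite pcompA -(pcompA H) k1 pcomp1F | rewrite pcompA -(pcompA G') h2 pcomp1F].
- by rewrite spec_pcomp hs ks mapH_pcomp.
- by move=> c' h; rewrite spec_pcomp hc // kc // pcompF1.
Qed.

Lemma upper_liftc i (f : {mpoly KK[n]}) : upper i f -> upper i (map_mpoly liftc f).
Proof.
move=> h m; rewrite mcoeff_map_any ?liftc0 // => nz; apply: h.
by apply: contra nz => /eqP ->; rewrite liftc0.
Qed.

Lemma Lft_up i (f : {mpoly KK[n]}) : upper i f -> Lft (Emap i f).
Proof.
move=> hu; have hu' := upper_liftc hu.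
have fx : fixi i (map_mpoly liftc f) by apply/avoid_fixi/upper_avoid.
exists (Emap i (map_mpoly liftc f)), (Emap i (- map_mpoly liftc f)); split.
- exact: tame_Emap_up.
- by apply: tame_Emap_up; apply: upperNR.
- split; first exact: Emap_fix_inv.
  by rewrite -{2}[map_mpoly liftc f]opprK; apply: Emap_fix_inv; apply: fixiN.
- by rewrite spec_mapH !map_Emap map_liftc.
- by move=> c' h; rewrite spec_mapH map_Emap map_liftc0 // Emap0.
Qed.

Lemma Lft_lf i (l : 'I_n -> KK) : l i = 0 -> Lft (Emap i (lform l)).
Proof.
move=> li; set l' := fun j => liftc (l j).
have l'i : l' i = 0 by rewrite /l' li liftc0.
have fx : fixi i (lform l') by apply: lform_fixi.
exists (Emap i (lform l')), (Emap i (- lform l')); split.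
- exact: tame_Emap_lf.
- by rewrite lformNR; apply: tame_Emap_lf; rewrite l'i oppr0.
- split; first exact: Emap_fix_inv.
  by rewrite -{2}[lform l']opprK; apply: Emap_fix_inv; apply: fixiN.
- rewrite spec_mapH !map_Emap !map_lform; congr Emap; apply: eq_lform => j.
  exact: ev_liftc.
- move=> c' h; rewrite spec_mapH map_Emap map_lform.
  rewrite (@eq_lform _ _ _ (fun _ => 0)) ?lform0 ?Emap0 // => j.
  exact: ev_liftc0.
Qed.

Lemma Lft_WG W : WG W -> Lft W.
Proof.
elim=> [|i f H hf _ IH|i l H hl _ IH]; first exact: Lft_id.
- by apply: Lft_comp => //; apply: Lft_up.
- by apply: Lft_comp => //; apply: Lft_lf.
Qed.

End Lift.
Section Transfer.
Variables (k : fieldType) (L : fieldExtType k) (c : L) (n : nat).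
Let E := <<1; c>>%AS.
Local Notation KK := (subvs_of E).
Local Notation pre := (vsproj E).

Lemma mem_adj x : adj_pred c x -> x \in E.
Proof. by move=> [p ->]; rewrite /evZ; apply: mempx_Fadjoin; apply/polyOver1P; exists p. Qed.

Lemma pre_val x : adj_pred c x -> vsval (pre x) = x.
Proof. by move=> h; rewrite vsprojK //; apply: mem_adj. Qed.

Lemma pre0 : pre 0 = 0.
Proof. exact: linear0. Qed.

Lemma vsval_inj : injective (vsval : KK -> L).
Proof. exact: fmorph_inj. Qed.

Lemma map_pre (p : {mpoly L[n]}) : (forall m, adj_pred c p@_m) ->
  map_mpoly vsval (map_mpoly pre p) = p.
Proof.
move=> h; apply/mpolyP => m; rewrite mcoeff_map_mpoly /= mcoeff_map_any ?pre0 //.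
exact: pre_val.
Qed.

Lemma mapH_inj (A B : polymap KK n) : mapH vsval A = mapH vsval B -> A = B.
Proof.
move=> h; apply: eq_from_tnth => i; have := congr1 (fun T => tnth T i) h.
rewrite !tnth_mapH => h'; apply/mpolyP => m; apply: vsval_inj.
by rewrite -!mcoeff_map_mpoly h'.
Qed.

Lemma map_vsC (x : KK) : map_mpoly vsval (x%:MP_[n]) = (vsval x)%:MP_[n].
Proof. exact: map_mpolyC. Qed.

Lemma map_vsCX (x : KK) j : map_mpoly vsval (x%:MP_[n] * 'X_j) = (vsval x)%:MP_[n] * 'X_j.
Proof. by rewrite rmorphM /= map_vsC map_mpolyX. Qed.

Lemma transfer (H : polymap L n) : tame_over (adj_pred c) H ->
  exists H', tame_over (fun _ : KK => True) H' /\ mapH vsval H' = H.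
Proof.
elim=> {H} [F [A [B [b [hS hb hAB hBA hF]]]]|F [a [a' [f [ha hf hs hF]]]]|
            F G _ [F' [tF eF]] _ [G' [tG eG]]|F G _ [G' [tG eG]] hF h1 h2].
- pose A' := map_mx pre A; pose B' := map_mx pre B.
  have eA : map_mx vsval A' = A by apply/matrixP => i j; rewrite !mxE pre_val //; case: (hS i j).
  have eB : map_mx vsval B' = B by apply/matrixP => i j; rewrite !mxE pre_val //; case: (hS i j).
  exists [tuple \sum_(j < n) (A' i j)%:MP * 'X_j + (pre (b i))%:MP | i < n]; split.
    apply: tame_affine; exists A', B', (fun i => pre (b i)); split => //.
    + apply: (@map_mx_inj _ _ vsval); by rewrite map_mxM eA eB hAB map_mx1.
    + apply: (@map_mx_inj _ _ vsval); by rewrite map_mxM eA eB hBA map_mx1.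
    + by move=> i; rewrite tnth_mktuple.
  apply: eq_from_tnth => i; rewrite tnth_mapH tnth_mktuple hF rmorphD rmorph_sum /=.
  rewrite map_vsC pre_val //; congr (_ + _); apply: eq_bigr => j _.
  by rewrite map_vsCX /A' mxE pre_val //; case: (hS i j).
- have nzp : forall i, pre (a i) * pre (a' i) = 1.
    move=> i; apply: vsval_inj; have [sa [sa' e]] := ha i.
    by rewrite rmorph1 rmorphM /= !pre_val // e.
  exists [tuple (pre (a i))%:MP * 'X_i + map_mpoly pre (f i) | i < n]; split.
    apply: tame_triangular; exists (fun i => pre (a i)), (fun i => pre (a' i)).
    exists (fun i => map_mpoly pre (f i)); split => //.
    + move=> i m; rewrite mcoeff_msupp mcoeff_map_any ?pre0 // => nz; apply: (hs i).
      by rewrite mcoeff_msupp; apply: contra nz => /eqP ->; rewrite pre0.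
    + by move=> i; rewrite tnth_mktuple.
  apply: eq_from_tnth => i; rewrite tnth_mapH tnth_mktuple hF rmorphD /=.
  rewrite map_vsCX map_pre // pre_val //.
  by have [] := ha i.
- exists (pc F' G'); split; first exact: tame_comp.
  by rewrite mapH_pcomp eF eG.
- exists (mapH pre F); have eF : mapH vsval (mapH pre F) = F.
    by apply: eq_from_tnth => i; rewrite !tnth_mapH map_pre //; apply: hF.
  split => //; apply: (tame_inv tG) => //.
  + apply: mapH_inj; by rewrite mapH_pcomp eF eG h1 mapH_id.
  + apply: mapH_inj; by rewrite mapH_pcomp eF eG h2 mapH_id.
Qed.

Lemma core (F : polymap {poly k} n) (e : {poly k}) : evZ c e = 1 ->
  tame_over (adj_pred c) (spec c F) -> affine_part_id F ->
  exists G, [/\ tame G, spec c G = spec c F &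
    forall c' : L, evZ c' e = 0 -> spec c' G = idmap_poly L n].
Proof.
move=> ec tF hF; have [H' [tH eH]] := transfer tF.
have nH := tame_Nice tH.
have wH : WG H'.
  apply: WG_of_Nice => // i j; apply: vsval_inj.
  rewrite -mcoeff_map_mpoly -tnth_mapH eH /spec tnth_mktuple mcoeff_map_mpoly /=.
  rewrite hF ?mdeg1 // mcoeffXU !rmorph_nat //.
have [G [G' [tG _ _ sG cG]]] := Lft_WG ec wH.
by exists G; split => //; rewrite sG eH.
Qed.

End Transfer.
Section Final.
Variables (k : finFieldType) (L : fieldExtType k) (n : nat).

Lemma pmin_ex (c : L) : exists p : {poly k}, minPoly 1 c == map_poly (in_alg L) p.
Proof. by have /polyOver1P [p ->] := minPolyOver 1 c; exists p. Qed.

Definition pmin (c : L) : {poly k} := xchoose (pmin_ex c).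

Lemma pminE c : map_poly (in_alg L) (pmin c) = minPoly 1 c.
Proof. by apply/esym/eqP; apply: (xchooseP (pmin_ex c)). Qed.

Lemma ev_pmin c : evZ c (pmin c) = 0.
Proof. by rewrite /evZ pminE; apply/eqP; apply: root_minPoly. Qed.

Lemma ev_dvd (c c' : L) (q : {poly k}) : evZ c q = 0 -> evZ c' (pmin c) = 0 -> evZ c' q = 0.
Proof.
move=> hq hp.
have /dvdpP [r er] : minPoly 1 c %| map_poly (in_alg L) q.
  apply: minPoly_dvdp; first by apply/polyOver1P; exists q.
  by apply/eqP; exact: hq.
by move: hp; rewrite /evZ er hornerM -pminE => ->; rewrite mulr0.
Qed.

Lemma agree (c c' : L) (A B : polymap {poly k} n) : spec c A = spec c B ->
  evZ c' (pmin c) = 0 -> spec c' A = spec c' B.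
Proof.
move=> h hp; apply: eq_from_tnth => i; rewrite /spec !tnth_mktuple.
have := congr1 (fun T => tnth T i) h; rewrite /spec !tnth_mktuple => h'.
apply/mpolyP => m; rewrite !mcoeff_map_mpoly /=; apply/eqP; rewrite -subr_eq0 -rmorphB.
apply/eqP; apply: (ev_dvd _ hp); rewrite rmorphB /=.
by have := congr1 (mcoeff m) h'; rewrite !mcoeff_map_mpoly /= => ->; rewrite subrr.
Qed.

Local Notation finL := (FinFieldExtType L).

Lemma fermat (x : L) : x != 0 -> x ^+ (#|finL|.-1) = 1.
Proof.
move=> nx; have ex : x ^+ #|finL| = x by exact: (expf_card (x : finL)).
have pos : (0 < #|finL|)%N by apply/card_gt0P; exists (0 : finL).
move: ex; rewrite -(prednK pos) exprS => /eqP.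
by rewrite -{3}[x]mulr1 (inj_eq (mulfI nx)) => /eqP.
Qed.

Lemma card_gt1 : (1 < #|finL|)%N.
Proof.
apply/card_gt1P; exists (0 : finL), (1 : finL); split => //.
by rewrite eq_sym oner_eq0.
Qed.

Definition ee (c : L) : {poly k} := 1 - (pmin c) ^+ (#|finL|.-1).

Lemma ev_ee (c : L) : evZ c (ee c) = 1.
Proof.
rewrite /ee rmorphB rmorph1 rmorphXn /= ev_pmin expr0n.
have -> : (#|finL|.-1 == 0%N) = false by move: card_gt1; case: #|finL| => [|[]].
by rewrite subr0.
Qed.

Lemma ev_ee0 (c c' : L) : evZ c' (pmin c) != 0 -> evZ c' (ee c) = 0.
Proof. by move=> h; rewrite /ee rmorphB rmorph1 rmorphXn /= fermat // subrr. Qed.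

Variable F : polymap {poly k} n.
Hypothesis hT : forall c : L, tame_over (adj_pred c) (spec c F).
Hypothesis hA : affine_part_id F.

Lemma core2 (c : L) : exists G, [/\ tame G, spec c G = spec c F &
  forall c' : L, evZ c' (pmin c) != 0 -> spec c' G = idmap_poly L n].
Proof.
have [G [tG sG cG]] := core (ev_ee c) (hT c) hA.
by exists G; split => // c' h; apply: cG; apply: ev_ee0.
Qed.

Lemma assemble (P : L -> bool) :
  (forall c c', P c -> evZ c' (pmin c) = 0 -> P c') ->
  forall s : seq L, exists G, [/\ tame G,
    forall c', spec c' G = spec c' F \/ spec c' G = idmap_poly L n,
    forall c', ~~ P c' -> spec c' G = idmap_poly L n &
    forall c0, c0 \in s -> P c0 -> spec c0 G = spec c0 F].
Proof.
move=> hP; elim=> [|c s [G [tG h1 h2 h3]]].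
  exists (idmap_poly _ n); split => //; first exact: tame_id.
  by move=> c'; right; rewrite spec_id.
  by move=> c' _; rewrite spec_id.
case Pc: (P c); last first.
  exists G; split => // c0; rewrite in_cons => /orP[/eqP->|]; first by rewrite Pc.
  exact: h3.
case: (h1 c) => [sc|sc].
  exists G; split => // c0; rewrite in_cons => /orP[/eqP->|] //; exact: h3.
have [H [tH sH cH]] := core2 c.
have idc : spec c G = spec c (idmap_poly _ n) by rewrite spec_id.
exists (pc H G); split.
- exact: tame_comp.
- move=> c'; rewrite spec_pcomp; case: (eqVneq (evZ c' (pmin c)) 0) => [z|nz].
    by left; rewrite (agree idc z) (agree sH z) spec_id pcompF1.
  by rewrite cH // pcomp1F; apply: h1.
- move=> c' nP; rewrite spec_pcomp; case: (eqVneq (evZ c' (pmin c)) 0) => [z|nz].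
    by move: nP; rewrite (hP _ _ Pc z).
  by rewrite cH // pcomp1F; apply: h2.
- move=> c0; rewrite in_cons spec_pcomp; case: (eqVneq (evZ c0 (pmin c)) 0) => [z|nz].
    by move=> _ _; rewrite (agree idc z) (agree sH z) spec_id pcompF1.
  move=> /orP[/eqP e0|c0s] Pc0; first by move: nz; rewrite e0 ev_pmin eqxx.
  by rewrite cH // pcomp1F; apply: h3.
Qed.

End Final.
Theorem mainTheorem8 (k : finFieldType) (n : nat) (g : {poly k})
    (F : polymap {poly k} n) :
  g != 0 ->
  tame_over (loc_pred g) (to_frac_map F) ->
  is_GA F ->
  affine_part_id F ->
  (forall (L : fieldExtType k) (c : L), tame_over (adj_pred c) (spec c F)) ->
  forall m : nat, (0 < m)%N ->
  forall L : fieldExtType k, \dim {:L} = m ->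
  exists G Gt : polymap {poly k} n,
    [/\ tame G, tame Gt &
      forall c : L,
        [/\ evZ c g != 0 -> spec c G = idmap_poly L n,
            evZ c g = 0 -> spec c G = spec c F &
            evZ c g != 0 -> spec c Gt = spec c F]].
Proof.
move=> _ _ _ hA hT m _ L _.
have hTL : forall c : L, tame_over (adj_pred c) (spec c F) by move=> c; apply: hT.
pose s : seq L := enum (FinFieldExtType L).
have ins : forall c : L, c \in s by move=> c; exact: (mem_enum (FinFieldExtType L) c).
have [G [tG _ h2 h3]] := assemble hTL hA (P := fun c => evZ c g == 0)
  (fun c c' (Pc : evZ c g == 0) z => introT eqP (ev_dvd (eqP Pc) z)) s.
have [Gt [tGt _ _ k3]] := assemble hTL hA (P := fun _ => true) (fun _ _ _ _ => erefl) s.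
exists G, Gt; split => // c; split.
- by move=> nz; apply: h2.
- by move=> z; apply: h3 => //; rewrite z.
- by move=> _; apply: k3.
Qed.
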